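(* The center $Z(X)$ of any $\mathsf{T_{z}S}$-closed semigroup $X$ is periodic.
   Context: $\mathsf{T_{z}S}$ is the class of Hausdorff zero-dimensional topological semigroups. A semigroup $X$ is $\mathsf{T_{z}S}$-closed if for every isomorphic topological embedding of $X$ (discrete topology) into some $Y\in\mathsf{T_{z}S}$ the image is closed in $Y$. $Z(X)=\{z\in X:\forall x\ (xz=zx)\}$. A semigroup is periodic if each element has some power $x^n$ ($n\ge1$) that is an idempotent. *)

(* Defs.v *)
From HB Require Import structures.
From mathcomp Require Import all_boot all_order.
From mathcomp Require Import all_classical topology.
Set Implicit Arguments. Unset Strict Implicit. Unset Printing Implicit Defensive.
Local Open Scope classical_set_scope.

Definition semigroup_law (X : Type) (mul : X -> X -> X) : Prop :=
  forall x y z, mul x (mul y z) = mul (mul x y) z.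

(* x^n for n >= 1:  spow mul x n = x^(n+1). *)
Fixpoint spow (X : Type) (mul : X -> X -> X) (x : X) (n : nat) : X :=
  match n with
  | O => x
  | S m => mul x (spow mul x m)
  end.

Definition sg_idempotent (X : Type) (mul : X -> X -> X) (e : X) : Prop :=
  mul e e = e.

Definition sg_center (X : Type) (mul : X -> X -> X) : set X :=
  [set z | forall x, mul x z = mul z x].

Definition sg_periodic_set (X : Type) (mul : X -> X -> X) (S : set X) : Prop :=
  forall x, S x -> exists n : nat, sg_idempotent mul (spow mul x n).

(* Zero-dimensional in the usual sense: the clopen sets form a base. *)
Definition clopen_base (Y : topologicalType) : Prop :=
  forall (x : Y) (U : set Y), open U -> U x ->
    exists V : set Y, [/\ clopen V, V x & V `<=` U].

Definition TzS (Y : topologicalType) (mulY : Y -> Y -> Y) : Prop :=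
  [/\ semigroup_law mulY,
      continuous (fun p : Y * Y => mulY p.1 p.2),
      hausdorff_space Y
    & clopen_base Y].

(* f : X -> Y is an isomorphic topological embedding of X, with X carrying the
   discrete topology: an injective homomorphism which is a homeomorphism onto its
   image (continuity is automatic from discreteness; continuity of the inverse
   means the image is discrete in the subspace topology). *)
Definition discrete_embedding (X : Type) (mul : X -> X -> X)
    (Y : topologicalType) (mulY : Y -> Y -> Y) (f : X -> Y) : Prop :=
  [/\ injective f,
      (forall x y, f (mul x y) = mulY (f x) (f y))
    & (forall x, exists U : set Y, open U /\ U `&` range f = [set f x])].

Definition TzS_closed (X : Type) (mul : X -> X -> X) : Prop :=
  forall (Y : topologicalType) (mulY : Y -> Y -> Y) (f : X -> Y),
    TzS mulY -> discrete_embedding mul mulY f -> closed (range f).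

(* Main.v *)
Require Import Defs.
From mathcomp Require Import all_boot all_order all_classical topology.
From HB Require Import structures.
From mathcomp Require Import zify.
Module P1.
Set Implicit Arguments. Unset Strict Implicit. Unset Printing Implicit Defensive.
Local Open Scope classical_set_scope.

Section Defs1.
Variables (X : Type) (mul : X -> X -> X) (z : X).

Definition pw n c := iter n (mul z) c.
Definition per c := exists m d, 0 < d /\ pw m c = pw (m + d) c.
Definition Tk k n := 0 < n /\ k`! %| n.
Definition cong k a b := exists i j, [/\ k`! %| i, k`! %| j & pw i a = pw j b].
Definition eqv a b := exists m, pw m a = pw m b.
Definition cls c : set X := [set b | eqv c b].
Definition Q := {S : set X | exists a, ~ per a /\ S = cls a}.
Definition mkQ c (h : ~ per c) : Q := exist _ (cls c) (ex_intro _ c (conj h erefl)).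
Definition rep (q : Q) : X := sval (cid (proj2_sig q)).
Definition ev c y := exists k, forall n, Tk k n -> pw n c = y.
Definition e c := match pselect (exists y, ev c y) with
  | left h => sval (cid h) | right _ => c end.
Definition Y := (X + Q)%type.
Definition L c : Y := match pselect (per c) with
  | left _ => inl (e c) | right h => inr (mkQ h) end.
Definition r (u : Y) := match u with inl x => x | inr q => rep q end.
Definition mulY (u v : Y) : Y := match u, v with
  | inl x, inl y => inl (mul x y) | _, _ => L (mul (r u) (r v)) end.
Definition Z k c : set Y := [set u | (exists c', cong k c' c /\ u = L c') \/
   (exists n, Tk k n /\ u = inl (pw n c))].
Definition opY (O : set Y) := forall q, O (inr q) -> exists k, Z k (rep q) `<=` O.

Lemma fact_dvd k k' : k <= k' -> k`! %| k'`!.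
Proof. by move=> h; rewrite (fact_split h) dvdn_mulr. Qed.

Lemma cong_mono k k' a b : k <= k' -> cong k' a b -> cong k a b.
Proof.
move=> h [i [j [hi hj e1]]]; exists i, j; split => //.
  exact: dvdn_trans (fact_dvd h) hi.
exact: dvdn_trans (fact_dvd h) hj.
Qed.

Lemma Tk_mono k k' n : k <= k' -> Tk k' n -> Tk k n.
Proof. by move=> h [h1 h2]; split => //; exact: dvdn_trans (fact_dvd h) h2. Qed.

Lemma Z_mono k k' c : k <= k' -> Z k' c `<=` Z k c.
Proof.
move=> h u [[c' [h1 ->]]|[n [h1 ->]]].
  by left; exists c'; split => //; exact: cong_mono h h1.
by right; exists n; split => //; exact: Tk_mono h h1.
Qed.

Lemma opT : opY setT.
Proof. by move=> q _; exists 0. Qed.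

Lemma opI : setI_closed opY.
Proof.
move=> A B hA hB q [/hA [k1 h1] /hB [k2 h2]]; exists (maxn k1 k2) => u hu; split.
  by apply: h1; apply: Z_mono hu; apply: leq_maxl.
by apply: h2; apply: Z_mono hu; apply: leq_maxr.
Qed.

Lemma op_bigU (I : Type) (f : I -> set Y) : (forall i, opY (f i)) ->
  opY (\bigcup_i f i).
Proof.
move=> hf q [i _ hi]; have [k hk] := hf i q hi.
by exists k => u /hk hu; exists i.
Qed.

End Defs1.

HB.instance Definition _ X mul z := gen_eqMixin (@Y X mul z).
HB.instance Definition _ X mul z := gen_choiceMixin (@Y X mul z).
HB.instance Definition _ X mul z := isOpenTopological.Build (@Y X mul z)
  (@opT X mul z) (@opI X mul z) (@op_bigU X mul z).

Lemma openYE X mul z (O : set (@Y X mul z)) : open O = opY O.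
Proof. by []. Qed.
Lemma nbhsYE X mul z (u : @Y X mul z) W : nbhs u W = exists O, [/\ opY O, O u & O `<=` W].
Proof. by []. Qed.
End P1.
Import P1.
Module P2.
Set Implicit Arguments. Unset Strict Implicit. Unset Printing Implicit Defensive.
Local Open Scope classical_set_scope.

Section Alg.
Variables (X : Type) (mul : X -> X -> X) (z : X).
Hypothesis assoc : semigroup_law mul.
Hypothesis hz : forall x, mul x z = mul z x.
Local Notation pw := (pw mul z).
Local Notation per := (per mul z).
Local Notation cong := (cong mul z).
Local Notation eqv := (eqv mul z).
Local Notation ev := (ev mul z).
Local Notation e := (e mul z).
Local Notation Tk := Tk.

Lemma pwD n m c : pw (n + m) c = pw n (pw m c).
Proof. exact: iterD. Qed.

Lemma pwC n m c : pw n (pw m c) = pw m (pw n c).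
Proof. by rewrite -!pwD addnC. Qed.

Lemma pw_mull n x c : pw n (mul x c) = mul x (pw n c).
Proof.
elim: n => //= n IH; rewrite /P1.pw /= -/(P1.pw mul z n _) IH.
by rewrite assoc -hz -assoc.
Qed.

Lemma pw_mulr n x c : pw n (mul c x) = mul (pw n c) x.
Proof.
elim: n => //= n IH; rewrite /P1.pw /= -/(P1.pw mul z n _) IH.
by rewrite assoc.
Qed.

Lemma pw_mul n m a b : mul (pw n a) (pw m b) = pw (n + m) (mul a b).
Proof. by rewrite -pw_mulr -pw_mull pwD. Qed.

Lemma spow_pw n : spow mul z n = pw n z.
Proof. by elim: n => //= n ->. Qed.

Lemma per_shift m d c : pw m c = pw (m + d) c ->
  forall t s, pw (m + t + s * d) c = pw (m + t) c.
Proof.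
move=> h t; elim=> [|s IH]; first by rewrite mul0n addn0.
rewrite mulSn.
have -> : m + t + (d + s * d) = (t + s * d) + (m + d) by lia.
rewrite pwD -h -pwD -IH; congr (pw _ c); lia.
Qed.

Lemma aper_inj c i j : ~ per c -> pw i c = pw j c -> i = j.
Proof.
move=> hc h; case: (ltngtP i j) => // hij.
  by exfalso; apply: hc; exists i, (j - i); split; [lia|rewrite h; congr (pw _ c); lia].
by exfalso; apply: hc; exists j, (i - j); split; [lia|rewrite -h; congr (pw _ c); lia].
Qed.

Lemma per_mull x c : per c -> per (mul x c).
Proof. by move=> [m [d [hd h]]]; exists m, d; rewrite !pw_mull h. Qed.

Lemma per_mulr x c : per c -> per (mul c x).
Proof. by move=> [m [d [hd h]]]; exists m, d; rewrite !pw_mulr h. Qed.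

Lemma per_pw n c : per (pw n c) <-> per c.
Proof.
split=> [[m [d [hd h]]]|[m [d [hd h]]]].
  by exists (m + n), d; split => //; rewrite pwD h -pwD; congr (pw _ c); lia.
by exists m, d; split => //; rewrite pwC h pwC.
Qed.

Lemma per_eqv a b : eqv a b -> per a -> per b.
Proof. by move=> [m h] /(per_pw m); rewrite h => /per_pw. Qed.

Lemma eqv_sym a b : eqv a b -> eqv b a.
Proof. by move=> [m h]; exists m. Qed.

Lemma eqv_trans a b c : eqv a b -> eqv b c -> eqv a c.
Proof.
move=> [m h1] [n h2]; exists (m + n).
by rewrite pwD pwC h1 pwC h2 -pwD.
Qed.

Lemma eqv_mull x a b : eqv a b -> eqv (mul x a) (mul x b).
Proof. by move=> [m h]; exists m; rewrite !pw_mull h. Qed.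

Lemma eqv_mulr x a b : eqv a b -> eqv (mul a x) (mul b x).
Proof. by move=> [m h]; exists m; rewrite !pw_mulr h. Qed.

Lemma cong_sym k a b : cong k a b -> cong k b a.
Proof. by move=> [i [j [h1 h2 h3]]]; exists j, i. Qed.

Lemma cong_refl k a : cong k a a.
Proof. by exists 0, 0; split; rewrite ?dvdn0. Qed.

Lemma cong_trans k a b c : cong k a b -> cong k b c -> cong k a c.
Proof.
move=> [i [j [h1 h2 h3]]] [i' [j' [h1' h2' h3']]].
exists (i + i'), (j + j'); split; rewrite ?dvdn_add //.
by rewrite addnC pwD h3 pwC h3' pwC -pwD addnC.
Qed.

Lemma per_cong k a b : cong k a b -> per a -> per b.
Proof.
move=> [i [j [_ _ h]]] /(per_pw i); rewrite h => /per_pw //.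
Qed.

Lemma cong_mull k x a b : cong k a b -> cong k (mul x a) (mul x b).
Proof. by move=> [i [j [h1 h2 h3]]]; exists i, j; rewrite !pw_mull h3. Qed.

Lemma cong_mulr k x a b : cong k a b -> cong k (mul a x) (mul b x).
Proof. by move=> [i [j [h1 h2 h3]]]; exists i, j; rewrite !pw_mulr h3. Qed.

Lemma cong_mul k a b a' b' : cong k a a' -> cong k b b' ->
  cong k (mul a b) (mul a' b').
Proof.
move=> h1 h2; apply: cong_trans (cong_mulr _ h1) _; exact: cong_mull.
Qed.

Lemma cong_pw k n a : k`! %| n -> cong k (pw n a) a.
Proof. by move=> h; exists 0, n; split; rewrite ?dvdn0. Qed.

Lemma eqv_cong k a b : eqv a b -> cong k a b.
Proof.
move=> [m h]; exists (m * k`!), (m * k`!); split; rewrite ?dvdn_mull //.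
have -> : m * k`! = (m * k`! - m) + m.
  have := fact_gt0 k; have : m <= m * k`! by rewrite leq_pmulr // fact_gt0.
  lia.
by rewrite pwD h -pwD.
Qed.

Lemma Tk_fact k : Tk k k`!.
Proof. by split; rewrite ?fact_gt0. Qed.

Lemma Tk_add k n m : Tk k n -> Tk k m -> Tk k (n + m).
Proof. by move=> [h1 h2] [h3 h4]; split; [lia|rewrite dvdn_add]. Qed.

Lemma Tk_ge k n : Tk k n -> k <= n.
Proof.
move=> [h1 h2]; apply: leq_trans (fact_geq k) _; exact: dvdn_leq.
Qed.

Lemma per_eq_mod m d c : 0 < d -> pw m c = pw (m + d) c ->
  forall n n', m <= n -> m <= n' -> d %| n -> d %| n' -> pw n c = pw n' c.
Proof.
move=> hd h.
suff H : forall n n', m <= n -> n <= n' -> d %| n -> d %| n' -> pw n c = pw n' c.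
  move=> n n' h1 h2 h3 h4; case: (leqP n n') => hn; first exact: H.
  by symmetry; apply: H => //; exact: ltnW.
move=> n n' h1 h2 h3 h4.
have hd' : d %| n' - n by exact: dvdn_sub.
have -> : n' = m + (n - m) + ((n' - n) %/ d) * d by rewrite divnK //; lia.
by rewrite (per_shift h); congr (pw _ c); lia.
Qed.

Lemma ev_per c : per c -> exists y, ev c y.
Proof.
move=> [m [d [hd h]]]; exists (pw (m + d)`! c), (m + d) => n [hn1 hn2].
apply: (per_eq_mod hd h).
- by apply: leq_trans (Tk_ge (conj hn1 hn2)); lia.
- apply: leq_trans (fact_geq _); lia.
- apply: dvdn_trans hn2; apply: dvdn_fact; lia.
- apply: dvdn_fact; lia.
Qed.

Lemma ev_uniq c y y' : ev c y -> ev c y' -> y = y'.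
Proof.
move=> [k h] [k' h']; rewrite -(h (k`! * k'`!)) ?(h' (k`! * k'`!)) //.
  by split; rewrite ?muln_gt0 ?fact_gt0 ?dvdn_mull.
by split; rewrite ?muln_gt0 ?fact_gt0 ?dvdn_mulr.
Qed.

Lemma e_spec c : per c -> ev c (e c).
Proof.
move=> hc; rewrite /P1.e; case: pselect => [h|h]; first by case: cid.
by exfalso; apply: h; exact: ev_per.
Qed.

Lemma e_ev c y : per c -> ev c y -> e c = y.
Proof. move=> hc; exact: ev_uniq (e_spec hc). Qed.

Lemma e_mull x c : per c -> e (mul x c) = mul x (e c).
Proof.
move=> hc; apply: e_ev; first exact: per_mull.
have [k hk] := e_spec hc; exists k => n hn; by rewrite pw_mull hk.
Qed.

Lemma e_mulr x c : per c -> e (mul c x) = mul (e c) x.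
Proof.
move=> hc; apply: e_ev; first exact: per_mulr.
have [k hk] := e_spec hc; exists k => n hn; by rewrite pw_mulr hk.
Qed.

Lemma e_pw c : per c -> exists N, e c = pw N c.
Proof. move=> hc; have [k hk] := e_spec hc; exists k`!; rewrite hk //; exact: Tk_fact. Qed.

Lemma per_e c : per c -> per (e c).
Proof. by move=> hc; have [N ->] := e_pw hc; apply/per_pw. Qed.

Lemma e_idem c : per c -> e (e c) = e c.
Proof.
move=> hc; apply: e_ev; first exact: per_e.
have [k hk] := e_spec hc; exists k => n hn.
rewrite -{1}(hk k`!); last exact: Tk_fact.
rewrite -pwD hk //; apply: Tk_add => //; exact: Tk_fact.
Qed.

Lemma e_eqv a b : eqv a b -> per a -> e a = e b.
Proof.
move=> [m hm] ha; symmetry; apply: e_ev; first exact: per_eqv (ex_intro _ m hm) ha.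
have [k hk] := e_spec ha; exists (maxn k m) => n hn.
have hmn : m <= n by apply: leq_trans (Tk_ge hn); apply: leq_maxr.
have -> : n = (n - m) + m by lia.
rewrite pwD -hm -pwD subnK //; apply: hk; apply: Tk_mono hn; exact: leq_maxl.
Qed.

Lemma e_cong a b k : per a -> (forall n, Tk k n -> pw n a = e a) ->
  cong k b a -> e b = e a.
Proof.
move=> ha hk hba; apply: e_ev; first exact: per_cong (cong_sym hba) ha.
have [i [j [hi hj hij]]] := hba.
exists (maxn k i.+1) => n hn.
have hin : i < n by apply: leq_trans (Tk_ge hn); apply: leq_maxr.
have hkn : Tk k n by apply: Tk_mono hn; exact: leq_maxl.
have -> : n = (n - i) + i by lia.
rewrite pwD hij -pwD; apply: hk; split; first lia.
apply: dvdn_add => //; apply: dvdn_sub => //; by case: hkn.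
Qed.

End Alg.
End P2.
Import P2.
Module P3.
Set Implicit Arguments. Unset Strict Implicit. Unset Printing Implicit Defensive.
Local Open Scope classical_set_scope.

Section Sg.
Variables (X : Type) (mul : X -> X -> X) (z : X).
Hypothesis assoc : semigroup_law mul.
Hypothesis hz : forall x, mul x z = mul z x.
Local Notation pw := (pw mul z).
Local Notation per := (per mul z).
Local Notation cong := (cong mul z).
Local Notation eqv := (eqv mul z).
Local Notation e := (e mul z).
Local Notation L := (L mul z).
Local Notation mulY := (@P1.mulY X mul z).
Local Notation rep := (@rep X mul z).
Local Notation mkQ := (@mkQ X mul z).
Local Notation Z := (@P1.Z X mul z).
Local Notation YY := (@Y X mul z).
Local Notation per_mull' := (per_mull assoc hz).
Local Notation per_mulr' := (per_mulr (z:=z) assoc).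
Local Notation eqv_mull' := (eqv_mull assoc hz).
Local Notation eqv_mulr' := (eqv_mulr (z:=z) assoc).
Local Notation e_mull' := (e_mull assoc hz).
Local Notation e_mulr' := (e_mulr (z:=z) assoc).
Local Notation cong_mull' := (cong_mull assoc hz).
Local Notation cong_mulr' := (cong_mulr (z:=z) assoc).
Local Notation cong_mul' := (cong_mul assoc hz).
Local Notation pw_mull' := (pw_mull assoc hz).
Local Notation pw_mulr' := (pw_mulr z assoc).
Local Notation pw_mul' := (pw_mul assoc hz).

Lemma rep_spec q : ~ per (rep q) /\ sval q = cls mul z (rep q).
Proof. by rewrite /P1.rep; case: cid. Qed.

Lemma mkQ_eq c1 c2 (h1 : ~ per c1) (h2 : ~ per c2) : eqv c1 c2 -> mkQ h1 = mkQ h2.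
Proof.
move=> h; apply: eq_exist; apply/seteqP; split => b /= hb.
  exact: eqv_trans (eqv_sym h) hb.
exact: eqv_trans h hb.
Qed.

Lemma mkQ_inj c1 c2 (h1 : ~ per c1) (h2 : ~ per c2) : mkQ h1 = mkQ h2 -> eqv c1 c2.
Proof.
move=> /(congr1 sval) /= h.
have : cls mul z c2 c2 by exists 0.
by rewrite -h.
Qed.

Lemma L_per c : per c -> L c = inl (e c).
Proof. by move=> hc; rewrite /P1.L; case: pselect. Qed.

Lemma L_aper c (h : ~ per c) : L c = inr (mkQ h).
Proof.
rewrite /P1.L; case: pselect => [//|h']; congr inr.
by rewrite (Prop_irrelevance h h').
Qed.

Lemma rep_eqv c (h : ~ per c) : eqv (rep (mkQ h)) c.
Proof.
have [_ h2] := rep_spec (mkQ h); have : cls mul z c c by exists 0.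
by rewrite -[cls mul z c]/(sval (mkQ h)) h2.
Qed.

Lemma inrL q : inr q = L (rep q).
Proof.
have [h1 h2] := rep_spec q; rewrite (L_aper h1); congr inr.
move: h1 h2; case: q => S pS h1 /= h2; exact: eq_exist.
Qed.

Lemma L_eqv a b : eqv a b -> L a = L b.
Proof.
move=> h; case: (pselect (per a)) => ha.
  rewrite (L_per ha) (L_per (per_eqv h ha)) (e_eqv h ha) //.
have hb : ~ per b by move=> hb; apply: ha; exact: per_eqv (eqv_sym h) hb.
by rewrite (L_aper ha) (L_aper hb); congr inr; exact: mkQ_eq.
Qed.

Lemma mulYll x y : mulY (inl x) (inl y) = inl (mul x y). Proof. by []. Qed.

Lemma Ll x d : mulY (inl x) (L d) = L (mul x d).
Proof.
case: (pselect (per d)) => hd.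
  by rewrite (L_per hd) mulYll (L_per (per_mull' x hd)) (e_mull' x hd).
rewrite (L_aper hd) /=; apply: L_eqv; apply: eqv_mull'; exact: rep_eqv.
Qed.

Lemma Lr c y : mulY (L c) (inl y) = L (mul c y).
Proof.
case: (pselect (per c)) => hc.
  by rewrite (L_per hc) mulYll (L_per (per_mulr' y hc)) (e_mulr' y hc).
rewrite (L_aper hc) /=; apply: L_eqv; apply: eqv_mulr'; exact: rep_eqv.
Qed.

Lemma LL c d : mulY (L c) (L d) = L (mul c d).
Proof.
have pmr := per_mulr'; have pml := per_mull'.
case: (pselect (per c)) => hc; case: (pselect (per d)) => hd.
- rewrite (L_per hc) (L_per hd) mulYll (L_per (pmr d c hc)).
  by rewrite -(e_mull' (e c) hd) -(e_mulr' d hc) e_idem //; exact: pmr.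
- rewrite (L_per hc) Ll (L_per (pmr d c hc)).
  have hec := per_e hc.
  by rewrite (L_per (pmr d _ hec)) !(e_mulr' d) // e_idem.
- rewrite (L_per hd) Lr (L_per (pml c d hd)).
  have hed := per_e hd.
  by rewrite (L_per (pml c _ hed)) !(e_mull' c) // e_idem.
- rewrite (L_aper hc) (L_aper hd) /=; apply: L_eqv.
  apply: eqv_trans (eqv_mulr' _ (rep_eqv hc)) _.
  exact: eqv_mull' _ (rep_eqv hd).
Qed.

Lemma mulY_assoc : semigroup_law mulY.
Proof.
move=> [x|q] [y|q'] [w|q'']; rewrite ?(inrL q) ?(inrL q') ?(inrL q'');
  rewrite ?mulYll ?Ll ?Lr ?LL ?mulYll ?Ll ?Lr ?LL ?mulYll ?Ll ?Lr ?LL;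
  by rewrite assoc.
Qed.

End Sg.
End P3.
Import P3.
Module P4.
Set Implicit Arguments. Unset Strict Implicit. Unset Printing Implicit Defensive.
Local Open Scope classical_set_scope.

Section Top.
Variables (X : Type) (mul : X -> X -> X) (z : X).
Hypothesis assoc : semigroup_law mul.
Hypothesis hz : forall x, mul x z = mul z x.
Local Notation pw := (pw mul z).
Local Notation per := (per mul z).
Local Notation cong := (cong mul z).
Local Notation eqv := (eqv mul z).
Local Notation e := (e mul z).
Local Notation L := (L mul z).
Local Notation mulY := (@P1.mulY X mul z).
Local Notation rep := (@rep X mul z).
Local Notation mkQ := (@mkQ X mul z).
Local Notation Z := (@P1.Z X mul z).
Local Notation YY := (@Y X mul z).
Local Notation opY := (@P1.opY X mul z).
Local Notation cong_mull' := (cong_mull assoc hz).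
Local Notation cong_mulr' := (cong_mulr (z:=z) assoc).
Local Notation cong_mul' := (cong_mul assoc hz).
Local Notation pw_mull' := (pw_mull assoc hz).
Local Notation pw_mulr' := (pw_mulr z assoc).
Local Notation pw_mul' := (pw_mul assoc hz).

Lemma Z_L k c : Z k c (L c).
Proof. by left; exists c; split => //; exact: cong_refl. Qed.

Lemma Z_inr k q : Z k (rep q) (inr q).
Proof. by rewrite (inrL q); exact: Z_L. Qed.

Lemma Z_pw k n c : Tk k n -> Z k c (inl (pw n c)).
Proof. by move=> h; right; exists n. Qed.

Lemma lZ k x b v : Z k b v -> Z k (mul x b) (mulY (inl x) v).
Proof.
move=> [[b' [hb ->]]|[n [hn ->]]].
  by rewrite Ll //; left; exists (mul x b'); split => //; exact: cong_mull'.
by rewrite mulYll -pw_mull'; exact: Z_pw.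
Qed.

Lemma Zl k y a u : Z k a u -> Z k (mul a y) (mulY u (inl y)).
Proof.
move=> [[a' [ha ->]]|[n [hn ->]]].
  by rewrite Lr //; left; exists (mul a' y); split => //; exact: cong_mulr'.
by rewrite mulYll -pw_mulr'; exact: Z_pw.
Qed.

Lemma ZZ k a b u v : Z k a u -> Z k b v -> Z k (mul a b) (mulY u v).
Proof.
move=> [[a' [ha ->]]|[n [hn ->]]] [[b' [hb ->]]|[m [hm ->]]].
- by rewrite LL //; left; exists (mul a' b'); split => //; exact: cong_mul'.
- rewrite Lr //; left; exists (mul a' (pw m b)); split => //.
  by apply: cong_mul' => //; apply: cong_pw; case: hm.
- rewrite Ll //; left; exists (mul (pw n a) b'); split => //.
  by apply: cong_mul' => //; apply: cong_pw; case: hn.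
- by rewrite mulYll pw_mul'; apply: Z_pw; exact: Tk_add.
Qed.

Lemma Z_sub k a b : cong k b a -> exists K, Z K b `<=` Z k a.
Proof.
move=> hba; have [i [j [hi hj hij]]] := hba.
exists (maxn k i.+1) => u [[c' [hc ->]]|[n [hn ->]]].
  left; exists c'; split => //; apply: cong_trans _ hba.
  by apply: cong_mono hc; exact: leq_maxl.
have hin : i < n by apply: leq_trans (Tk_ge hn); apply: leq_maxr.
have hkn : Tk k n by apply: Tk_mono hn; exact: leq_maxl.
have -> : n = (n - i) + i by lia.
rewrite pwD hij -pwD; apply: Z_pw; split; first lia.
apply: dvdn_add => //; apply: dvdn_sub => //; by case: hkn.
Qed.

Lemma L_inr c : ~ per c -> exists q, L c = inr q.
Proof. by move=> h; exists (mkQ h); exact: L_aper. Qed.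

Lemma Z_inr_cong k a q : Z k a (inr q) -> cong k (rep q) a.
Proof.
move=> [[c' [hc hq]]|[n [_ //]]].
case: (pselect (per c')) => hp; first by move: hq; rewrite L_per.
move: hq; rewrite (L_aper hp) => -[->].
apply: cong_trans hc; apply: eqv_cong; exact: rep_eqv.
Qed.

Lemma op_inl x : opY [set inl x].
Proof. by move=> q. Qed.

Lemma op_Z k a : opY (Z k a).
Proof. move=> q /Z_inr_cong; exact: Z_sub. Qed.

Lemma nbhs_inl x : nbhs (inl x : YY) [set inl x].
Proof. by rewrite nbhsYE; exists [set inl x]; split => //; exact: op_inl. Qed.

Lemma nbhs_Z k q : nbhs (inr q : YY) (Z k (rep q)).
Proof. by rewrite nbhsYE; exists (Z k (rep q)); split => //; [exact: op_Z|exact: Z_inr]. Qed.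

Lemma nbhsL c W : nbhs (L c) W -> exists k, Z k c `<=` W.
Proof.
rewrite nbhsYE => -[O [hO hOc hOW]].
case: (pselect (per c)) => hc.
  have [k hk] := e_spec hc; exists k.
  move: hOc; rewrite (L_per hc) => hOc.
  move=> u [[c' [hc' ->]]|[n [hn ->]]]; apply: hOW.
    have hc'p : per c' := per_cong (cong_sym hc') hc.
    by rewrite (L_per hc'p) (e_cong hc hk hc').
  by rewrite hk.
move: hOc; rewrite (L_aper hc) => /hO [k hk].
have : cong k c (rep (mkQ hc)) by apply: eqv_cong; apply: eqv_sym; exact: rep_eqv.
move=> /Z_sub [K hK]; exists K => u /hK /hk; exact: hOW.
Qed.

Lemma Z_disj k a b w : ~ per a -> ~ per b -> Z k a w -> Z k b w -> cong k a b.
Proof.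
move=> ha hb [[c1 [h1 ->]]|[n [hn ->]]] [[c2 [h2 e2]]|[m [hm e2]]].
- have hc1 : ~ per c1 by move=> p; apply: ha; exact: per_cong h1 p.
  have hc2 : ~ per c2 by move=> p; apply: hb; exact: per_cong h2 p.
  move: e2; rewrite (L_aper hc1) (L_aper hc2) => -[hq0]; have hq : eqv c1 c2 by (have : cls mul z c2 c2 by exists 0); rewrite -hq0.
  apply: cong_trans (cong_sym h1) _; apply: cong_trans h2.
  exact: eqv_cong.
- have hc1 : ~ per c1 by move=> p; apply: ha; exact: per_cong h1 p.
  by move: e2; rewrite (L_aper hc1).
- have hc2 : ~ per c2 by move=> p; apply: hb; exact: per_cong h2 p.
  by move: e2; rewrite (L_aper hc2).
- move: e2 => -[e2]; exists n, m; split => //; [by case: hn|by case: hm].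
Qed.

Lemma inl_notin_Z x a : ~ per a -> exists k, ~ Z k a (inl x).
Proof.
move=> ha.
have notL : forall k c', cong k c' a -> L c' <> inl x.
  move=> k c' h; have hc : ~ per c' by move=> p; apply: ha; exact: per_cong h p.
  by rewrite (L_aper hc).
case: (pselect (exists n, x = pw n a)) => [[n0 hn0]|hno].
  exists n0.+1 => -[[c' [h1 h2]]|[n [hn [hx]]]].
    by apply: (notL _ _ h1).
  have := Tk_ge hn; rewrite -(aper_inj ha (etrans (esym hn0) hx)); lia.
exists 0 => -[[c' [h1 h2]]|[n [hn [hx]]]].
  by apply: (notL _ _ h1).
by apply: hno; exists n.
Qed.

Lemma delta a b : ~ per b -> ~ eqv a b -> exists k, ~ cong k a b.
Proof.
move=> hb hab; apply: contrapT => hall.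
have hc : forall k, cong k a b by move=> k; apply: contrapT => hk; apply: hall; exists k.
have [i [j [_ _ hij]]] := hc 0.
have [i' [j' [hi' hj' h']]] := hc (i + j).+1.
have e1 : i' + j = i + j'.
  apply: (aper_inj hb); rewrite pwD -hij -pwD addnC pwD h' -pwD //.
have F := fact_geq (i + j).+1.
set M := (i + j).+1`! in hi' hj' F.
case: (ltngtP i j) => hij'.
- have hd : M %| j - i.
    have -> : j - i = j' - i' by lia.
    exact: dvdn_sub.
  have := dvdn_leq (_ : 0 < j - i) hd; lia.
- have hd : M %| i - j.
    have -> : i - j = i' - j' by lia.
    exact: dvdn_sub.
  have := dvdn_leq (_ : 0 < i - j) hd; lia.
- by apply: hab; exists i; rewrite hij hij'.
Qed.

Lemma sepY (p q : YY) : p <> q -> exists A B,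
  [/\ nbhs p A, nbhs q B & forall w, A w -> B w -> False].
Proof.
case: p => [x|q1]; case: q => [y|q2] hne.
- exists [set inl x], [set inl y]; split; try exact: nbhs_inl.
  by move=> w -> [] hxy; apply: hne; rewrite hxy.
- have [k hk] := inl_notin_Z x (rep_spec q2).1.
  exists [set inl x], (Z k (rep q2)); split; [exact: nbhs_inl|exact: nbhs_Z|].
  by move=> w -> /hk.
- have [k hk] := inl_notin_Z y (rep_spec q1).1.
  exists (Z k (rep q1)), [set inl y]; split; [exact: nbhs_Z|exact: nbhs_inl|].
  by move=> w /[swap] -> /hk.
- have hab : ~ eqv (rep q1) (rep q2).
    move=> h; apply: hne; rewrite (inrL q1) (inrL q2); exact: L_eqv.
  have [k hk] := delta (rep_spec q2).1 hab.
  exists (Z k (rep q1)), (Z k (rep q2)); split; try exact: nbhs_Z.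
  move=> w h1 h2; apply: hk; apply: Z_disj h1 h2.
    exact: (rep_spec q1).1.
  exact: (rep_spec q2).1.
Qed.

Lemma hausY : hausdorff_space YY.
Proof.
move=> p q cl; apply: contrapT => hne.
have [A [B [hA hB dis]]] := sepY hne.
by have [w [Aw Bw]] := cl A B hA hB; exact: dis w Aw Bw.
Qed.

Lemma clopenZ k q : clopen (Z k (rep q)).
Proof.
split; first exact: op_Z.
rewrite -openC openYE => q' hq'.
exists k => w h1 h2; apply: hq'.
have hc := Z_disj (rep_spec q).1 (rep_spec q').1 h2 h1.
by rewrite (inrL q'); left; exists (rep q'); split => //; exact: cong_sym.
Qed.

Lemma clopen_inl x : clopen [set (inl x : YY)].
Proof.
split; first exact: op_inl.
rewrite -openC openYE => q' _.
have [k hk] := inl_notin_Z x (rep_spec q').1.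
by exists k => w h1 h2; apply: hk; rewrite -h2.
Qed.

Lemma cbY : clopen_base YY.
Proof.
move=> [x|q] U hU hUy.
  by exists [set inl x]; split => //; [exact: clopen_inl|move=> w ->].
have [k hk] := hU q hUy.
by exists (Z k (rep q)); split => //; [exact: clopenZ|exact: Z_inr].
Qed.
End Top.
End P4.
Import P4.
Set Implicit Arguments. Unset Strict Implicit. Unset Printing Implicit Defensive.
Local Open Scope classical_set_scope.

Section Cont.
Variables (X : Type) (mul : X -> X -> X) (z : X).
Hypothesis assoc : semigroup_law mul.
Hypothesis hz : forall x, mul x z = mul z x.
Local Notation mulY := (@P1.mulY X mul z).
Local Notation YY := (@Y X mul z).

Lemma contY : continuous (fun p : YY * YY => mulY p.1 p.2).
Proof.
move=> [u v] W hW; rewrite /=.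
case: u hW => [x|q]; case: v => [y|q'] hW /=.
- have hw := nbhs_singleton hW.
  exists ([set inl x], [set inl y]); first by split; exact: nbhs_inl.
  by move=> [a b] /= [-> ->].
- have [k hk] := nbhsL hW.
  exists ([set inl x], Z k (rep q')); first by split; [exact: nbhs_inl|exact: nbhs_Z].
  by move=> [a b] /= [-> hb]; apply: hk; exact: lZ.
- have [k hk] := nbhsL hW.
  exists (Z k (rep q), [set inl y]); first by split; [exact: nbhs_Z|exact: nbhs_inl].
  by move=> [a b] /= [ha ->]; apply: hk; exact: Zl.
- have [k hk] := nbhsL hW.
  exists (Z k (rep q), Z k (rep q')); first by split; exact: nbhs_Z.
  by move=> [a b] /= [ha hb]; apply: hk; exact: ZZ.
Qed.
End Cont.

Unset Implicit Arguments.

Theorem lemma5p4 (X : Type) (mul : X -> X -> X) :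
  semigroup_law mul -> TzS_closed mul -> sg_periodic_set mul (sg_center mul).
Proof.
move=> assoc hcl c hc; apply: contrapT => hno.
have hz : forall x, mul x c = mul c x := hc.
have hap : ~ per mul c c.
  move=> [m [d [hd h]]]; apply: hno.
  set P := (m.+1 * d).
  have hP : m.+1 <= P by rewrite /P leq_pmulr.
  exists (P - 1); rewrite /sg_idempotent spow_pw (pw_mul assoc hz).
  have -> : mul c c = pw mul c 1 c by [].
  rewrite -pwD.
  have -> : P - 1 + (P - 1) + 1 = m + (P - 1 - m) + m.+1 * d by rewrite -/P; lia.
  by rewrite (per_shift h); congr (pw mul c _ c); lia.
have emb : discrete_embedding mul (mulY (mul:=mul) (z:=c)) inl.
  split; first by move=> a b [].
    by [].
  move=> x; exists [set inl x]; split; first exact: op_inl.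
  apply/seteqP; split; first by move=> w [].
  by move=> w ->; split => //; exists x.
have tz : TzS (mulY (mul:=mul) (z:=c)).
  split; [exact: mulY_assoc|exact: contY|exact: hausY|exact: cbY].
have cl := hcl _ _ _ tz emb.
have : closure (range (inl : X -> Y mul c)) (inr (mkQ hap) : Y mul c).
  move=> B hB; have hB2 : nbhs (L mul c c) B by rewrite (L_aper hap).
  have [k hk] := nbhsL hB2.
  exists (inl (pw mul c k`! c)); split; first by exists (pw mul c k`! c).
  apply: hk; apply: Z_pw; exact: Tk_fact.
by move=> /cl [x _].
Qed.
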